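(* Let $\mu>0$ and let $X$ have the skew-symmetric-Laplace-uniform density with parameter $\mu$ (defined in the context). For $a\in\mathbb{R}$, the mean deviation $\eta_a=E|X-a|$ is $$\eta_a=\begin{cases} -\left(1+\frac{2}{\mu}\right)e^{-\mu}+\left(\frac{2}{\mu}-a\right) & a<-\mu,\\[2pt] \frac{a}{\mu}e^{-\mu}+\left(\frac{a}{\mu}-\frac{2}{\mu}+1\right)e^{a}+\left(\frac{2}{\mu}-a\right) & -\mu\le a<0,\\[2pt] \frac{a}{\mu}e^{-\mu}+\left(\frac{a}{\mu}+\frac{2}{\mu}+1\right)e^{-a}+\left(a-\frac{2}{\mu}\right) & 0\le a<\mu,\\[2pt] \left(1+\frac{2}{\mu}\right)e^{-\mu}+2e^{-a}+\left(a-\frac{2}{\mu}\right) & a\ge\mu.\end{cases}$$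
   Context: For $\mu\in\mathbb{R}\setminus\{0\}$, the skew-symmetric-Laplace-uniform distribution $SSLUD(\mu)$ is the distribution on $\mathbb{R}$ with density $$g(x)=\begin{cases} 0 & \text{if } x/\mu<-1,\\ e^{-|x|}\left(\dfrac{x}{2\mu}+\dfrac12\right) & \text{if } -1\le x/\mu<1,\\ e^{-|x|} & \text{if } x/\mu\ge 1.\end{cases}$$ *)

(* Defs.v *)
From HB Require Import structures.
From mathcomp Require Import all_boot all_order all_algebra.
From mathcomp Require Import all_classical all_reals all_analysis.
Set Implicit Arguments. Unset Strict Implicit. Unset Printing Implicit Defensive.
Import Order.TTheory GRing.Theory Num.Theory.
Local Open Scope ring_scope.

Definition sslud_pdf (R : realType) (mu x : R) : R :=
  if x / mu < -1 then 0
  else if x / mu < 1 then expR (- `|x|) * (x / (2 * mu) + 1 / 2)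
  else expR (- `|x|).

Definition sslud_mean_dev (R : realType) (mu a : R) : \bar R :=
  (\int[@lebesgue_measure R]_(x in [set: R]) (`|x - a| * sslud_pdf mu x)%:E)%E.

(* Main.v *)
Require Import Defs.
From HB Require Import structures.
From mathcomp Require Import all_boot all_order all_algebra.
From mathcomp Require Import all_classical all_reals all_analysis.
From mathcomp Require Import ring lra measurable_realfun.
Import Order.TTheory GRing.Theory Num.Theory.
Import numFieldNormedType.Exports.
Local Open Scope ring_scope.
Local Open Scope classical_set_scope.
Section S.
Context {R : realType}.
Local Notation leb := (@lebesgue_measure R).

Definition Pp (al be ga x : R) :=
  expR x * (al * x ^+ 2 + (be - 2 * al) * x + (ga - be + 2 * al)).
Lemma Pp_derive (al be ga x : R) :
  is_derive x 1 (Pp al be ga) (expR x * (al * x ^+ 2 + be * x + ga)).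
Proof.
rewrite /Pp.
apply: is_derive_eq.
rewrite /GRing.scale /= ; ring.
Qed.
Definition Pn (al be ga x : R) :=
  - (expR (- x) * (al * x ^+ 2 + (be + 2 * al) * x + (ga + be + 2 * al))).
Lemma Pn_derive (al be ga x : R) :
  is_derive x 1 (Pn al be ga) (expR (- x) * (al * x ^+ 2 + be * x + ga)).
Proof.
rewrite /Pn.
apply: is_derive_eq.
rewrite /GRing.scale /= ; ring.
Qed.

Lemma is_derive_cont (g : R -> R) x d : is_derive x (1:R) g d -> {for x, continuous g}.
Proof.
move=> H; apply: differentiable_continuous; apply/derivable1_diffP.
by case: H.
Qed.

Lemma cont_pos (al be ga : R) : continuous (fun x : R => expR x * (al * x ^+ 2 + be * x + ga)).
Proof.
by move=> x; apply: is_derive_cont.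
Qed.

Lemma cont_neg (al be ga : R) : continuous (fun x : R => expR (- x) * (al * x ^+ 2 + be * x + ga)).
Proof.
by move=> x; apply: is_derive_cont.
Qed.

Lemma Ipos (al be ga p r : R) : p <= r ->
  (\int[leb]_(x in `[p, r]) (expR x * (al * x ^+ 2 + be * x + ga))%:E =
   (Pp al be ga r - Pp al be ga p)%:E)%E.
Proof.
rewrite le_eqVlt => /predU1P[<-|pr].
  by rewrite set_itv1 integral_set1 subrr.
rewrite EFinB; apply: continuous_FTC2 => //.
- exact/continuous_subspaceT/cont_pos.
- split.
  + by move=> z _; have [] := Pp_derive al be ga z.
  + apply/cvg_at_right_filter/is_derive_cont; exact: Pp_derive.
  + apply/cvg_at_left_filter/is_derive_cont; exact: Pp_derive.
- by move=> z _; rewrite derive1E; exact: (@derive_val _ _ _ _ _ _ _ (Pp_derive al be ga z)).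
Qed.

Lemma Ineg (al be ga p r : R) : p <= r ->
  (\int[leb]_(x in `[p, r]) (expR (- x) * (al * x ^+ 2 + be * x + ga))%:E =
   (Pn al be ga r - Pn al be ga p)%:E)%E.
Proof.
rewrite le_eqVlt => /predU1P[<-|pr].
  by rewrite set_itv1 integral_set1 subrr.
rewrite EFinB; apply: continuous_FTC2 => //.
- exact/continuous_subspaceT/cont_neg.
- split.
  + by move=> z _; have [] := Pn_derive al be ga z.
  + apply/cvg_at_right_filter/is_derive_cont; exact: Pn_derive.
  + apply/cvg_at_left_filter/is_derive_cont; exact: Pn_derive.
- by move=> z _; rewrite derive1E; exact: (@derive_val _ _ _ _ _ _ _ (Pn_derive al be ga z)).
Qed.

Lemma cvg_xexpNx : x * expR (- x) @[x --> +oo%R] --> (0:R).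
Proof.
apply/cvgrPdist_le => e e0.
near=> x.
rewrite sub0r normrN.
have x0 : 0 < x by near: x; exact: nbhs_pinfty_gt; rewrite num_real.
rewrite ger0_norm; last by rewrite mulr_ge0 ?expR_ge0 ?ltW.
have := expR_ge1Dxn 1 (ltW x0).
rewrite expRN => H.
have xe : 2 / e <= x by near: x; apply: nbhs_pinfty_ge; rewrite num_real.
have ex : 2 <= e * x by rewrite -ler_pdivrMl.
have E0 := expR_gt0 x.
rewrite ler_pdivrMr //.
have : 1 + x ^+ 2 / 2 <= expR x by move: H; rewrite factS /= expr2.
move: (expR x) E0 => E E0 H2.
nra.
Unshelve. all: by end_near. Qed.

Lemma Itail (a p : R) : a <= p ->
  (\int[leb]_(x in `[p, +oo[) (expR (- x) * (x - a))%:E =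
   (expR (- p) * (p - a + 1))%:E)%E.
Proof.
move=> ap.
have D (z : R) : is_derive z (1:R) (Pn 0 1 (-a)) (expR (- z) * (z - a)).
  apply: is_derive_eq; rewrite /GRing.scale /=; ring.
rewrite (@ge0_continuous_FTC2y _ _ (Pn 0 1 (-a)) _ 0).
- by rewrite /Pn; congr EFin; ring.
- move=> x px; rewrite mulr_ge0 ?expR_ge0 // subr_ge0 (le_trans ap) //.
- by apply/continuous_subspaceT => x; apply: is_derive_cont.
- have -> : Pn 0 1 (-a) = fun x => - (x * expR (- x)) + (a - 1) * expR (- x).
    by apply/funext => x; rewrite /Pn; ring.
  suff: (- (x * expR (- x)) + (a - 1) * expR (- x)) @[x --> +oo%R] --> (- 0 + (a - 1) * 0 : R).
    by rewrite oppr0 mulr0 addr0.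
  apply: cvgD; first by apply: cvgN; exact: cvg_xexpNx.
  apply: cvgM; first exact: cvg_cst.
  exact: cvgr_expR.
- by move=> x _; have [] := D x.
- apply/cvg_at_right_filter/is_derive_cont; exact: D.
- by move=> z _; rewrite derive1E; exact: (@derive_val _ _ _ _ _ _ _ (D z)).
Qed.

Lemma split_int (f : R -> R) (p q : R) (b : itv_bound R) :
  continuous f -> (forall x, 0 <= f x) -> p <= q -> (BRight q <= b)%O ->
  (\int[leb]_(x in [set` Interval (BLeft p) b]) (f x)%:E =
  \int[leb]_(x in `[p, q]) (f x)%:E +
  \int[leb]_(x in [set` Interval (BLeft q) b]) (f x)%:E)%E.
Proof.
move=> cf f0 pq qb.
have mf : measurable_fun [set: R] (EFin \o f).
  by apply/measurable_EFinP; exact: continuous_measurable_fun.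
rewrite (@itv_bndbnd_setU _ _ _ (BRight q)) ?bnd_simp//.
rewrite ge0_integral_setU //=.
- rewrite integral_itv_obnd_cbnd //. exact: measurable_funS mf.
- exact: measurable_funS mf.
- by move=> x _; rewrite lee_fin.
- apply/disj_setPS => x [/=]; rewrite !in_itv/= => /andP[_ xq].
  move=> /andP[qx _].
  by rewrite ltNge xq in qx.
Qed.


Lemma piece_pos (h : R -> R) (p r c1 c0 d1 d0 : R) : p <= r ->
  (forall x, p <= x -> x <= r -> h x = expR x * ((c1 * x + c0) * (d1 * x + d0))) ->
  (\int[leb]_(x in `[p, r]) (h x)%:E =
   (Pp (c1 * d1) (c1 * d0 + c0 * d1) (c0 * d0) r -
    Pp (c1 * d1) (c1 * d0 + c0 * d1) (c0 * d0) p)%:E)%E.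
Proof.
move=> pr hE; rewrite -Ipos //; apply: eq_integral => x.
rewrite inE /= in_itv /= => /andP[px xr]; rewrite hE //; congr EFin; ring.
Qed.

Lemma piece_neg (h : R -> R) (p r c1 c0 d1 d0 : R) : p <= r ->
  (forall x, p <= x -> x <= r -> h x = expR (- x) * ((c1 * x + c0) * (d1 * x + d0))) ->
  (\int[leb]_(x in `[p, r]) (h x)%:E =
   (Pn (c1 * d1) (c1 * d0 + c0 * d1) (c0 * d0) r -
    Pn (c1 * d1) (c1 * d0 + c0 * d1) (c0 * d0) p)%:E)%E.
Proof.
move=> pr hE; rewrite -Ineg //; apply: eq_integral => x.
rewrite inE /= in_itv /= => /andP[px xr]; rewrite hE //; congr EFin; ring.
Qed.

Lemma piece_tail (h : R -> R) (a p : R) : a <= p ->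
  (forall x, p <= x -> h x = expR (- x) * (x - a)) ->
  (\int[leb]_(x in `[p, +oo[) (h x)%:E = (expR (- p) * (p - a + 1))%:E)%E.
Proof.
move=> ap hE; rewrite -Itail //; apply: eq_integral => x.
rewrite inE /= in_itv /= andbT => px; by rewrite hE.
Qed.

Definition clamp (mu x : R) := Num.min (Num.max ((x / mu + 1) / 2) 0) 1.

Lemma clamp_mid mu x : 0 < mu -> - mu <= x -> x <= mu ->
  clamp mu x = 1 / (2 * mu) * x + 1 / 2.
Proof.
move=> mu0 h1 h2.
have e1 : -1 <= x / mu by rewrite ler_pdivlMr //; lra.
have e2 : x / mu <= 1 by rewrite ler_pdivrMr //; lra.
have mu1 : mu != 0 by rewrite gt_eqF.
rewrite /clamp max_l; last lra.
rewrite min_l; last lra.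
by field.
Qed.

Lemma clamp_hi mu x : 0 < mu -> mu <= x -> clamp mu x = 1.
Proof.
move=> mu0 h1.
have e1 : 1 <= x / mu by rewrite ler_pdivlMr //; lra.
by rewrite /clamp max_l ?min_r; lra.
Qed.

Lemma clamp_lo mu x : 0 < mu -> x <= - mu -> clamp mu x = 0.
Proof.
move=> mu0 h1.
have e1 : x / mu <= -1 by rewrite ler_pdivrMr //; lra.
by rewrite /clamp max_r ?min_l; lra.
Qed.

Lemma pdfE mu x : 0 < mu -> sslud_pdf mu x = expR (- `|x|) * clamp mu x.
Proof.
move=> mu0; rewrite /sslud_pdf.
have mu1 : mu != 0 by rewrite gt_eqF.
case: ifPn => [|]; rewrite -?leNgt ltr_pdivrMr // ?ler_pdivlMr // => h1.
  by rewrite clamp_lo ?mulr0 //; lra.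
case: ifPn => h2.
  have -> : clamp mu x = 1 / (2 * mu) * x + 1 / 2 by apply: clamp_mid => //; lra.
  by congr (_ * _); field.
have h3 : mu <= x by move: h2; rewrite mul1r -leNgt.
have -> : clamp mu x = 1 by apply: clamp_hi.
by rewrite mulr1.
Qed.

Lemma absE1 (a x : R) : a <= x -> `|x - a| = x - a.
Proof. by move=> h; rewrite ger0_norm // subr_ge0. Qed.
Lemma absE2 (a x : R) : x <= a -> `|x - a| = a - x.
Proof. by move=> h; rewrite ler0_norm ?opprB // subr_le0. Qed.
Lemma expabs_l (x : R) : x <= 0 -> expR (- `|x|) = expR x.
Proof. by move=> h; rewrite ler0_norm // opprK. Qed.
Lemma expabs_r (x : R) : 0 <= x -> expR (- `|x|) = expR (- x).
Proof. by move=> h; rewrite ger0_norm. Qed.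

Lemma cont_h (mu a : R) : 0 < mu ->
  continuous (fun x => `|x - a| * (expR (- `|x|) * clamp mu x)).
Proof.
move=> mu0 x.
apply: cvgM.
  apply: cvg_norm; apply: cvgB; [exact: cvg_id | exact: cvg_cst].
apply: cvgM.
  apply: (@cvg_comp _ _ _ (fun x => - `|x|) expR); last exact: continuous_expR.
  apply: cvgN; apply: cvg_norm; exact: cvg_id.
have -> : clamp mu = ((fun x => (x / mu + 1) / 2) \max (cst 0)) \min (cst 1).
  by apply/funext => y.
apply: continuous_min; last exact: cvg_cst.
apply: continuous_max; last exact: cvg_cst.
exact: is_derive_cont.
Qed.

End S.

Theorem mainTheorem7 (R : realType) (mu a : R) (hmu : 0 < mu) :
  sslud_mean_dev mu a =
  (if a < - mu then
     - (1 + 2 / mu) * expR (- mu) + (2 / mu - a)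
   else if a < 0 then
     a / mu * expR (- mu) + (a / mu - 2 / mu + 1) * expR a + (2 / mu - a)
   else if a < mu then
     a / mu * expR (- mu) + (a / mu + 2 / mu + 1) * expR (- a) + (a - 2 / mu)
   else
     (1 + 2 / mu) * expR (- mu) + 2 * expR (- a) + (a - 2 / mu))%:E.
Proof.
have mu0 : mu != 0 by rewrite gt_eqF.
pose h := fun x => `|x - a| * (expR (- `|x|) * clamp mu x).
have hc : continuous h by exact: cont_h.
have h0 : forall x, 0 <= h x.
  move=> x; rewrite /h mulr_ge0 // mulr_ge0 ?expR_ge0 //.
  by rewrite /clamp le_min ler01 andbT le_max lexx orbT.
have -> : sslud_mean_dev mu a = (\int[lebesgue_measure]_(x in [set: R]) (h x)%:E)%E.
  by rewrite /sslud_mean_dev; apply: eq_integral => x _; rewrite /h pdfE.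
have mh : measurable_fun [set: R] (EFin \o h).
  by apply/measurable_EFinP; exact: continuous_measurable_fun.
rewrite -(@itv_setU_setT _ _ true (- mu)) ge0_integral_setU //=; last 3 first.
- by rewrite (@itv_setU_setT _ _ true (- mu)).
- by move=> x _; rewrite lee_fin.
- apply/disj_setPS => x [/=]; rewrite !in_itv/= => xm /andP[mx _].
  by rewrite ltNge mx in xm.
rewrite [X in (X + _)%E]integral0_eq ?add0e; last first.
  move=> x; rewrite /= in_itv /= => xm.
  by rewrite /h clamp_lo ?mulr0 //; lra.
have m0 : -mu <= 0 by lra.
have m1 : 0 <= mu by lra.
have [ha1|ha1] := ltP a (-mu).
  rewrite (@split_int _ h _ _ _ hc h0 m0) // (@split_int _ h _ _ _ hc h0 m1) //.
  rewrite (@piece_pos _ h (-mu) 0 1 (-a) (1/(2*mu)) (1/2)) //; last first.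
    move=> x px xr; rewrite /h absE1 ?expabs_l ?clamp_mid //; first [ring | lra].
  rewrite (@piece_neg _ h 0 mu 1 (-a) (1/(2*mu)) (1/2)) //; last first.
    move=> x px xr; rewrite /h absE1 ?expabs_r ?clamp_mid //; first [ring | lra].
  rewrite (@piece_tail _ h a mu); last first.
    move=> x px; rewrite /h absE1 ?expabs_r ?clamp_hi //; first [ring | lra].
    lra.
  rewrite -!EFinD; congr EFin; rewrite /Pp /Pn ?oppr0 ?expR0.
  by field.
have [ha2|ha2] := ltP a 0.
  have a0 : a <= 0 by lra.
  rewrite (@split_int _ h _ _ _ hc h0 ha1) // (@split_int _ h _ _ _ hc h0 a0) //.
  rewrite (@split_int _ h _ _ _ hc h0 m1) //.
  rewrite (@piece_pos _ h (-mu) a (-1) a (1/(2*mu)) (1/2)) //; last first.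
    move=> x px xr; rewrite /h absE2 ?expabs_l ?clamp_mid //; first [ring | lra].
  rewrite (@piece_pos _ h a 0 1 (-a) (1/(2*mu)) (1/2)) //; last first.
    move=> x px xr; rewrite /h absE1 ?expabs_l ?clamp_mid //; first [ring | lra].
  rewrite (@piece_neg _ h 0 mu 1 (-a) (1/(2*mu)) (1/2)) //; last first.
    move=> x px xr; rewrite /h absE1 ?expabs_r ?clamp_mid //; first [ring | lra].
  rewrite (@piece_tail _ h a mu); last first.
    move=> x px; rewrite /h absE1 ?expabs_r ?clamp_hi //; first [ring | lra].
    lra.
  rewrite -!EFinD; congr EFin; rewrite /Pp /Pn ?oppr0 ?expR0.
  by field.
have [ha3|ha3] := ltP a mu.
  have a1 : a <= mu by lra.
  rewrite (@split_int _ h _ _ _ hc h0 m0) // (@split_int _ h _ _ _ hc h0 ha2) //.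
  rewrite (@split_int _ h _ _ _ hc h0 a1) //.
  rewrite (@piece_pos _ h (-mu) 0 (-1) a (1/(2*mu)) (1/2)) //; last first.
    move=> x px xr; rewrite /h absE2 ?expabs_l ?clamp_mid //; first [ring | lra].
  rewrite (@piece_neg _ h 0 a (-1) a (1/(2*mu)) (1/2)) //; last first.
    move=> x px xr; rewrite /h absE2 ?expabs_r ?clamp_mid //; first [ring | lra].
  rewrite (@piece_neg _ h a mu 1 (-a) (1/(2*mu)) (1/2)) //; last first.
    move=> x px xr; rewrite /h absE1 ?expabs_r ?clamp_mid //; first [ring | lra].
  rewrite (@piece_tail _ h a mu); last first.
    move=> x px; rewrite /h absE1 ?expabs_r ?clamp_hi //; first [ring | lra].
    lra.
  rewrite -!EFinD; congr EFin; rewrite /Pp /Pn ?oppr0 ?expR0.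
  by field.
rewrite (@split_int _ h _ _ _ hc h0 m0) // (@split_int _ h _ _ _ hc h0 m1) //.
rewrite (@split_int _ h _ _ _ hc h0 ha3) //.
rewrite (@piece_pos _ h (-mu) 0 (-1) a (1/(2*mu)) (1/2)) //; last first.
  move=> x px xr; rewrite /h absE2 ?expabs_l ?clamp_mid //; first [ring | lra].
rewrite (@piece_neg _ h 0 mu (-1) a (1/(2*mu)) (1/2)) //; last first.
  move=> x px xr; rewrite /h absE2 ?expabs_r ?clamp_mid //; first [ring | lra].
rewrite (@piece_neg _ h mu a (-1) a 0 1) //; last first.
  move=> x px xr; rewrite /h absE2 ?expabs_r ?clamp_hi //; first [ring | lra].
rewrite (@piece_tail _ h a a); last first.
  move=> x px; rewrite /h absE1 ?expabs_r ?clamp_hi //; first [ring | lra].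
  lra.
rewrite -!EFinD; congr EFin; rewrite /Pp /Pn ?oppr0 ?expR0.
by field.
Qed.
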